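(* For any positive integer $k$ and any $\underline{\zeta}\in\mathbb{R}^k$ we have \[ \lambda_{k,1}(\underline{\zeta})=\infty \quad\Longleftrightarrow\quad \widehat{\lambda}_{k,2}(\underline{\zeta})=\widehat{\lambda}_{k,3}(\underline{\zeta})=\cdots=\widehat{\lambda}_{k,k+1}(\underline{\zeta})=0. \]
   Context: For $\underline{\zeta}=(\zeta_1,\ldots,\zeta_k)\in\mathbb{R}^k$ and $1\leq j\leq k+1$, $\lambda_{k,j}(\underline{\zeta})$ (resp. $\widehat{\lambda}_{k,j}(\underline{\zeta})$) is the supremum of all $\eta\in\mathbb{R}$ such that the system $|x|\leq X$, $\max_{1\leq i\leq k}|\zeta_i x-y_i|\leq X^{-\eta}$ has at least $j$ linearly independent solutions $(x,y_1,\ldots,y_k)\in\mathbb{Z}^{k+1}$ for arbitrarily large real $X$ (resp. for all sufficiently large real $X$). *)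

(* Defs.v *)
From HB Require Import structures.
From mathcomp Require Import all_boot all_order all_algebra.
From mathcomp Require Import all_classical all_reals all_analysis.
Set Implicit Arguments. Unset Strict Implicit. Unset Printing Implicit Defensive.
Import Order.TTheory GRing.Theory Num.Theory.
Local Open Scope classical_set_scope.
Local Open Scope ring_scope.

(* An integer vector v in Z^(k+1) encodes (x, y_1, ..., y_k) with
   x = v 0 ord0 and y_i = v 0 (lift ord0 i). *)
Definition is_sol {R : realType} (k : nat) (zeta : 'I_k -> R) (X eta : R)
    (v : 'rV[int]_(k.+1)) : Prop :=
  `|((v 0 ord0)%:~R : R)| <= X /\
  forall i : 'I_k,
    `|zeta i * (v 0 ord0)%:~R - (v 0 (lift ord0 i))%:~R| <= X `^ (- eta).

(* the system has at least j linearly independent integer solutions: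
   j solutions (rows of A) which are linearly independent (over R,
   equivalently over Q or Z since they are integer vectors). *)
Definition has_indep_sols {R : realType} (k j : nat) (zeta : 'I_k -> R)
    (X eta : R) : Prop :=
  exists A : 'M[int]_(j, k.+1),
    (forall r : 'I_j, is_sol zeta X eta (row r A)) /\
    \rank (map_mx (fun z : int => (z%:~R : R)) A) = j.

Definition lambda {R : realType} (k j : nat) (zeta : 'I_k -> R) : \bar R :=
  ereal_sup [set (eta%:E)%E | eta in
    [set eta : R | forall X0 : R, exists X : R, X0 < X /\ has_indep_sols j zeta X eta]].

Definition lambda_hat {R : realType} (k j : nat) (zeta : 'I_k -> R) : \bar R :=
  ereal_sup [set (eta%:E)%E | eta in
    [set eta : R | exists X0 : R, forall X : R, X0 < X -> has_indep_sols j zeta X eta]].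

(* Main.v *)
Require Import Defs.
From HB Require Import structures.
From mathcomp Require Import all_boot all_order all_algebra.
From mathcomp Require Import all_classical all_reals all_analysis.
From mathcomp Require Import ring lra.
Import Order.TTheory GRing.Theory Num.Theory.
Local Open Scope ring_scope.
Set Implicit Arguments. Unset Strict Implicit.


Section Aux.
Variable R : realType.

Lemma int_small (z : int) : `|(z%:~R : R)| < 1 -> z = 0.
Proof.
rewrite -intr_norm => h.
have : (`|z| < 1 :> int).
  by rewrite -(ltr_int R).
by move=> h2; apply/eqP; rewrite -normr_le0 -ltzD1.
Qed.

Lemma ord2 (r : 'I_2) : r = 0 \/ r = 1.
Proof.
case: r => [[|[|//]]] p; [left|right]; exact/val_inj.
Qed.

Lemma sum_delta n (F : 'I_n -> R) (i : 'I_n) :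
  \sum_(l < n) F l * (l == i)%:R = F i.
Proof.
rewrite (bigD1 i) //= eqxx mulr1 big1 ?addr0 // => l /negbTE ->.
by rewrite mulr0.
Qed.

Lemma rank2 n (A : 'M[R]_(2, n)) (i j : 'I_n) :
  i != j -> A 0 i * A 1 j - A 0 j * A 1 i != 0 -> \rank A = 2%N.
Proof.
move=> nij hD.
set D := A 0 i * A 1 j - A 0 j * A 1 i in hD.
pose u : 'I_2 -> R := fun s => if s == 0 then A 1 j / D else - A 0 j / D.
pose w : 'I_2 -> R := fun s => if s == 0 then - A 1 i / D else A 0 i / D.
pose B : 'M[R]_(n, 2) := \matrix_(l, s) ((l == i)%:R * u s + (l == j)%:R * w s).
have hAB : A *m B = 1%:M.
  apply/matrixP => r s; rewrite !mxE.
  under eq_bigr do rewrite mxE mulrDr.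
  rewrite big_split /=.
  under eq_bigr do rewrite mulrA mulrAC.
  under [X in _ + X]eq_bigr do rewrite mulrA mulrAC.
  rewrite (@sum_delta _ (fun l => A r l * u s)) (@sum_delta _ (fun l => A r l * w s)).
  rewrite /u /w.
  case: (ord2 r) => ->; case: (ord2 s) => -> /=; rewrite ?mxE /=; rewrite /D; field; exact: hD.
apply/eqP; rewrite eqn_leq rank_leq_row /=.
have := mxrankM_maxl A B; rewrite hAB mxrank1; done.
Qed.

Lemma rank_le1 m n (A : 'M[R]_(m, n)) (c : 'cV[R]_m) (v : 'rV[R]_n) :
  A = c *m v -> (\rank A <= 1)%N.
Proof. move=> ->; exact: leq_trans (mxrankM_maxr _ _) (rank_leq_row _). Qed.

End Aux.


Section Main.
Variable R : realType.
Variable k : nat.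
Variable zeta : 'I_k -> R.

Lemma boolr_le1 (b : bool) : `|(((b%:R : int))%:~R : R)| <= 1.
Proof. by case: b; rewrite ?normr1 ?normr0. Qed.

Lemma zeta_le_sum i : `|zeta i| <= \sum_l `|zeta l|.
Proof.
rewrite (bigD1 i) //= lerDl; apply: sumr_ge0 => l _; exact: normr_ge0.
Qed.

Lemma Sh_neg (j : nat) (e : R) : (j <= k.+1)%N -> 0 < e ->
  exists X0 : R, forall X, X0 < X -> has_indep_sols j zeta X (- e).
Proof.
move=> hj he.
set S := \sum_l `|zeta l|.
have S0 : 0 <= S by apply: sumr_ge0 => l _; exact: normr_ge0.
exists (Num.max 1 ((S + 1) `^ e^-1)) => X.
rewrite gt_max => /andP[X1 XS].
exists (pid_mx j); split.
  move=> r; split.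
    rewrite !mxE; apply: le_trans (boolr_le1 _) _; exact: ltW.
  move=> i; rewrite opprK !mxE.
  apply: le_trans (ler_normB _ _) _.
  apply: (@le_trans _ _ (S + 1)).
    apply: lerD; last exact: boolr_le1.
    rewrite normrM; apply: (@le_trans _ _ (`|zeta i| * 1)).
      apply: ler_wpM2l; [exact: normr_ge0 | exact: boolr_le1].
    rewrite mulr1; exact: zeta_le_sum.
  have -> : S + 1 = ((S + 1) `^ e^-1) `^ e.
    by rewrite -powRrM mulVf ?gt_eqF // powRr1 // addr_ge0.
  apply: ge0_ler_powR; first exact: ltW.
  - by rewrite nnegrE powR_ge0.
  - by rewrite nnegrE; apply: le_trans (ltW X1).
  - exact: ltW.
rewrite (_ : map_mx _ _ = pid_mx j); first exact: rank_pid_mx.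
by apply/matrixP => a b; rewrite !mxE; case: (_ && _).
Qed.


Definition S1 (eta : R) := forall X0 : R, exists X : R, X0 < X /\ has_indep_sols 1 zeta X eta.

Lemma no_two (j : nat) (eta : R) : (2 <= j)%N -> 0 < eta ->
  (forall N : R, exists eta', N <= eta' /\ S1 eta') ->
  ~ (exists X0, forall X, X0 < X -> has_indep_sols j zeta X eta).
Proof.
move=> hj heta hS [X0 hX0].
set M := 1 + 2 / eta.
have M1 : 1 <= M by rewrite lerDl; apply: divr_ge0 => //; exact: ltW.
have Meta : M * eta = eta + 2 by rewrite /M mulrDl mul1r mulrVK ?unitfE ?gt_eqF.
have [eta' [hN hS1]] := hS (M + 1).
have [X1 [hX1 [A1 [hA1 rk1]]]] := hS1 (Num.max 2 X0).
move: hX1; rewrite gt_max => /andP[X12 X10].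
have X1ge1 : 1 <= X1 by apply: le_trans (ltW X12); lra.
have X1n0 : X1 != 0 by rewrite gt_eqF //; lra.
set X := X1 `^ M.
have XX1 : X1 <= X := le1r_powR X1ge1 M1.
have [Aj [hAj rkj]] := hX0 X (lt_le_trans X10 XX1).
have [hxv hev] := hA1 0.
set v := row 0 A1 in hxv hev *.
have e1 : X1 `^ (- eta') <= X1 `^ (- (M + 1)) by apply: ler_powR => //; rewrite lerN2.
have e1' : X1 `^ (- eta') < 1.
  apply: le_lt_trans e1 _.
  apply: (@le_lt_trans _ _ (X1 `^ (-1))).
    by apply: ler_powR => //; rewrite lerN2 lerDr; lra.
  by rewrite powR_inv1 ?invf_lt1; lra.
have xv0 : v 0 ord0 != 0.
  apply/negP => /eqP x0.
  move: rk1; rewrite (_ : map_mx _ A1 = 0) ?mxrank0 //.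
  apply/matrixP => a c; rewrite !mxE (ord1 a).
  case: (unliftP ord0 c) => [i ->|->].
    have := hev i; rewrite x0 mulr0 sub0r normrN /v mxE => hy.
    by rewrite (int_small (le_lt_trans hy e1')).
  by move: x0; rewrite /v mxE => ->.
have xvR : ((v 0 ord0)%:~R : R) != 0 by rewrite intr_eq0.
have hb1 : X * X1 `^ (- eta') <= X1^-1.
  apply: (@le_trans _ _ (X * X1 `^ (- (M + 1)))).
    by apply: ler_wpM2l => //; exact: powR_ge0.
  rewrite /X -powRD; last by apply/implyP.
  by rewrite opprD addrA subrr sub0r powR_inv1 //; lra.
have hb2 : X1 * X `^ (- eta) <= X1^-1.
  rewrite /X -powRrM.
  apply: (@le_trans _ _ (X1 * X1 `^ (-2))).
    apply: ler_wpM2l; first lra.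
    apply: ler_powR => //; rewrite mulrN Meta; lra.
  rewrite -{1}(powRr1 (ltW (lt_le_trans ltr01 X1ge1))) -powRD; last by apply/implyP.
  rewrite (_ : 1 + -2 = -1 :> R); last by lra.
  by rewrite powR_inv1 //; lra.
have key : forall r i, (v 0 ord0) * (Aj r (lift ord0 i)) = (Aj r ord0) * (v 0 (lift ord0 i)).
  move=> r i; have [hxw hew] := hAj r.
  have hew' := hew i; rewrite !mxE in hxw hew'.
  have hei := hev i.
  apply/eqP; rewrite -subr_eq0; apply/eqP; apply: (@int_small R).
  rewrite intrB !intrM.
  have id : forall a b c d t : R, a * d - c * b = c * (t * a - b) - a * (t * c - d).
    by move=> *; ring.
  rewrite (id _ _ _ _ (zeta i)).
  apply: le_lt_trans (ler_normB _ _) _.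
  rewrite !normrM.
  apply: (@le_lt_trans _ _ (X * X1 `^ (- eta') + X1 * X `^ (- eta))).
    apply: lerD; apply: ler_pM => //; exact: normr_ge0.
  apply: le_lt_trans (lerD hb1 hb2) _.
  rewrite -mulr2n -mulr_natr ltr_pdivrMl; lra.
pose c : 'cV[R]_j := \col_r ((Aj r ord0)%:~R / (v 0 ord0)%:~R).
have hA : map_mx (fun z : int => (z%:~R : R)) Aj = c *m map_mx (fun z : int => (z%:~R : R)) v.
  apply/matrixP => r col; rewrite !mxE big_ord1 !mxE.
  case: (unliftP ord0 col) => [i ->|->].
    have := congr1 (fun z : int => (z%:~R : R)) (key r i); rewrite !intrM => h.
    move: h xvR; rewrite /v !mxE => h hx.
    by rewrite mulrAC -h mulrC mulKf.
  by move: xvR; rewrite /v !mxE => hx; rewrite mulfVK.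
have := rank_le1 hA; rewrite rkj => h1.
by move: (leq_trans hj h1).
Qed.

End Main.


Section Dir.
Variable R : realType.
Variable k : nat.
Variable zeta : 'I_k -> R.

Definition fr (t : R) : R := t - (Num.floor t)%:~R.

Lemma fr_ge0 t : 0 <= fr t.
Proof. rewrite /fr subr_ge0; exact: floor_le. Qed.

Lemma fr_lt1 t : fr t < 1.
Proof.
rewrite /fr; have /andP[_ h] := floor_itv t; rewrite intrD in h; lra.
Qed.

Lemma trunc_close (a b : R) : 0 <= a -> 0 <= b -> Num.truncn a = Num.truncn b ->
  `|a - b| < 1.
Proof.
move=> ha hb e.
have /andP[a1 a2] := truncn_itv ha; have /andP[b1 b2] := truncn_itv hb.
rewrite e in a1 a2; rewrite -natr1 in a2 b2.
rewrite ltr_norml; apply/andP; split; lra.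
Qed.

Lemma dir_nat (N : nat) : (0 < N)%N -> exists (d : nat) (y : 'I_k -> int),
  (0 < d <= N ^ k)%N /\ forall i, `|zeta i * d%:R - (y i)%:~R| < N%:R^-1.
Proof.
case: N => [//|N'] _.
pose f : 'I_(N'.+1 ^ k).+1 -> {ffun 'I_k -> 'I_N'.+1} :=
  fun n => [ffun i => inord (Num.truncn (N'.+1%:R * fr (n%:R * zeta i)))].
have hlt : forall t, (Num.truncn (N'.+1%:R * fr t) < N'.+1)%N.
  move=> t; rewrite truncn_lt_nat; last by apply: mulr_ge0 => //; exact: fr_ge0.
  by rewrite -[X in _ < X]mulr1 ltr_pM2l ?fr_lt1.
have [a [b [nab hf]]] : exists a b, a != b /\ f a = f b.
  apply: contrapT => H.
  have inj : injective f.
    move=> a b e; apply/eqP/negPn/negP => hne; apply: H; exists a, b; split => //.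
  by have := leq_card _ inj; rewrite card_ffun !card_ord ltnn.
have core : forall a b : 'I_(N'.+1 ^ k).+1, (a < b)%N -> f a = f b ->
    exists (d : nat) (y : 'I_k -> int),
    (0 < d <= N'.+1 ^ k)%N /\ forall i, `|zeta i * d%:R - (y i)%:~R| < N'.+1%:R^-1.
  move=> a0 b0 hab e.
  exists (b0 - a0)%N, (fun i => Num.floor (b0%:R * zeta i) - Num.floor (a0%:R * zeta i)).
  split.
    rewrite subn_gt0 hab /=; apply: leq_trans (leq_subr _ _) _.
    by rewrite -ltnS.
  move=> i.
  have := congr1 (fun g : {ffun 'I_k -> 'I_N'.+1} => g i) e; rewrite !ffunE => /(congr1 val).
  rewrite /= !inordK ?hlt // => /trunc_close h.
  have {}h := h (mulr_ge0 (ler0n _ _) (fr_ge0 _)) (mulr_ge0 (ler0n _ _) (fr_ge0 _)).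
  rewrite -mulrBr normrM ger0_norm // in h.
  rewrite natrB ?(ltnW hab) // intrB.
  rewrite (_ : zeta i * (b0%:R - a0%:R) - _ = fr (b0%:R * zeta i) - fr (a0%:R * zeta i)); last by rewrite /fr; ring.
  by rewrite -div1r ltr_pdivlMr ?ltr0Sn // distrC mulrC.
case: (ltngtP a b) => hab.
- exact: core hf.
- exact: core (esym hf).
- by move: nab; rewrite (val_inj hab) eqxx.
Qed.


Lemma dirichlet : (0 < k)%N -> forall Q : R, 2 `^ (2 * k)%:R <= Q ->
  exists v : 'rV[int]_(k.+1), v 0 ord0 != 0 /\ `|((v 0 ord0)%:~R : R)| <= Q /\
   forall i, `|zeta i * (v 0 ord0)%:~R - (v 0 (lift ord0 i))%:~R| <= Q `^ (- ((2 * k)%:R)^-1).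
Proof.
move=> hk Q hQ.
set c : R := ((2 * k)%:R)^-1.
have kR : 0 < (k%:R : R) by rewrite ltr0n.
have k1 : 1 <= (k%:R : R) by rewrite ler1n.
have c0 : 0 < c by rewrite invr_gt0 ltr0n muln_gt0.
set t := Q `^ c.
have Q1 : 1 <= Q.
  apply: le_trans hQ; apply: le_trans (le1r_powR _ _); [lra|lra|].
  by rewrite natrM; lra.
have t2 : 2 <= t.
  have -> : (2 : R) = (2 `^ (2 * k)%:R) `^ c.
    by rewrite -powRrM /c mulfV ?powRr1 // gt_eqF // ltr0n muln_gt0 hk.
  apply: ge0_ler_powR => //; [exact: ltW | by rewrite nnegrE powR_ge0 | ].
  by rewrite nnegrE; lra.
have t0 : 0 <= t by lra.
have tk : Q `^ (k%:R^-1) = t ^+ 2.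
  rewrite /t -powR_mulrn // -powRrM; congr (_ `^ _).
  by rewrite /c natrM; field; rewrite gt_eqF.
set N := Num.truncn (t ^+ 2).
have hN : t <= N%:R.
  have := truncnS_gt (t ^+ 2); rewrite -/N -natr1 => h.
  have : t ^+ 2 - 1 - t >= 1 by rewrite expr2; nra.
  lra.
have N0 : (0 < N)%N by rewrite -(ltr0n R); lra.
have NQ : ((N ^ k)%N%:R : R) <= Q.
  have hN2 : (N%:R : R) <= t ^+ 2 by rewrite truncn_le exprn_ge0.
  apply: (@le_trans _ _ ((t ^+ 2) ^+ k)).
    rewrite natrX ler_pXn2r // nnegrE //; exact: exprn_ge0.
  rewrite -tk -powR_mulrn ?powR_ge0 // -powRrM mulVf ?gt_eqF // powRr1 //; lra.
have [d [y [/andP[d0 dN] herr]]] := dir_nat N0.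
exists (\row_c0 (if unlift ord0 c0 is Some i then y i else d%:Z)).
rewrite !mxE unlift_none; split; first by rewrite eqz_nat -lt0n.
split.
  apply: le_trans NQ; rewrite [X in X <= _](_ : _ = (d%:R : R)); last by rewrite ger0_norm.
  by rewrite ?ger0_norm ?ler_nat.
move=> i; rewrite mxE liftK.
apply: ltW; apply: lt_le_trans (herr i) _.
rewrite powRN -/c -/t lef_pV2 // posrE; lra.
Qed.

End Dir.


Section C.
Variable R : realType.
Variable k : nat.
Variable zeta : 'I_k -> R.

Lemma int_norm_ge1 (z : int) : z != 0 -> 1 <= `|(z%:~R : R)|.
Proof.
move=> hz; rewrite -intr_norm.
have : (1 <= `|z|) by rewrite -[1]add0r lezD1 normr_gt0.
by rewrite -(ler_int R).
Qed.

Lemma row_rV n (v : 'rV[int]_n) (r : 'I_1) : row r v = v.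
Proof. by apply/rowP => c0; rewrite !mxE (ord1 r). Qed.

Lemma some_two (mu : R) : (0 < k)%N -> 1 <= mu -> ~ S1 zeta mu ->
  exists eta, 0 < eta /\ exists X0, forall X, X0 < X -> has_indep_sols 2 zeta X eta.
Proof.
move=> hk mu1 nS.
have [X1 hX1] : exists X1, forall Y, X1 < Y -> ~ has_indep_sols 1 zeta Y mu.
  apply: contrapT => H; apply: nS => X0; apply: contrapT => H2; apply: H.
  by exists X0 => Y hY hs; apply: H2; exists Y; split.
set c : R := ((2 * k)%:R)^-1.
have c0 : 0 < c by rewrite invr_gt0 ltr0n muln_gt0.
have c1 : c <= 1 by rewrite invf_le1 ?ltr0n ?muln_gt0 // ler1n muln_gt0.
set Q0 : R := 2 `^ (2 * k)%:R.
have Q01 : 1 <= Q0.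
  apply: le_trans (le1r_powR _ _); [lra|lra|].
  by rewrite ler1n muln_gt0.
set d := c / (mu + 1).
have d0 : 0 < d by apply: divr_gt0 => //; lra.
have d1 : d <= 1.
  rewrite ler_pdivrMr; last lra.
  by nra.
exists (d * c); split; first exact: mulr_gt0.
set B := Num.max Q0 (X1 + 1).
have B1 : 1 <= B by rewrite le_max Q01.
exists (B `^ d^-1) => X hX.
have BX : B < X.
  apply: le_lt_trans hX; apply: le1r_powR => //.
  by rewrite invf_ge1.
have X1' : 1 <= X by apply: le_trans (ltW BX).
set Y := X `^ d.
have BY : B < Y.
  have -> : B = (B `^ d^-1) `^ d.
    by rewrite -powRrM mulVf ?gt_eqF // powRr1 //; lra.
  apply: gt0_ltr_powR => //; rewrite nnegrE ?powR_ge0 //; lra.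
have YQ0 : Q0 <= Y by apply: le_trans (ltW BY); rewrite le_max lexx.
have YX1 : X1 < Y by apply: le_lt_trans BY; rewrite le_max; apply/orP; right; lra.
have Y1 : 1 <= Y by apply: le_trans YQ0.
have YX : Y <= X by apply: ler1_powR.
have [v1 [x1n0 [hx1 he1]]] := dirichlet zeta hk YQ0.
have [v2 [x2n0 [hx2 he2]]] := dirichlet zeta hk (le_trans YQ0 (le_trans YX (lexx X))).
rewrite -/c in he1 he2.
pose A : 'M[int]_(2, k.+1) := \matrix_(r, c0) (if r == 0 then v1 0 c0 else v2 0 c0).
have r0 : row 0 A = v1 by apply/rowP => c0'; rewrite !mxE.
have r1 : row 1 A = v2 by apply/rowP => c0'; rewrite !mxE.
have eY : Y `^ (- c) = X `^ (- (d * c)) by rewrite /Y -powRrM mulrN.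
case: (pselect (exists i, v1 0 ord0 * v2 0 (lift ord0 i) - v2 0 ord0 * v1 0 (lift ord0 i) != 0)).
  move=> [i hi].
  exists A; split.
    move=> r; case: (ord2 r) => ->; [rewrite r0 | rewrite r1]; split.
    - exact: le_trans hx1 YX.
    - by move=> i0; rewrite -eY.
    - exact: hx2.
    - move=> i0; apply: le_trans (he2 i0) _; apply: ler_powR => //.
      rewrite lerN2 -[X in _ <= X]mul1r; apply: ler_wpM2r => //; exact: ltW.
  apply: (@rank2 _ _ _ ord0 (lift ord0 i)); first by rewrite neq_lift.
  rewrite !mxE /=.
  have : (((v1 0 ord0 * v2 0 (lift ord0 i) - v2 0 ord0 * v1 0 (lift ord0 i))%:~R : R) != 0).
    by rewrite intr_eq0.
  rewrite intrB !intrM.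
  by rewrite [X in _ - X != 0 -> _]mulrC.
move=> hno.
have hpar : forall i, v1 0 ord0 * v2 0 (lift ord0 i) = v2 0 ord0 * v1 0 (lift ord0 i).
  move=> i; apply/eqP; rewrite -subr_eq0; apply/negPn/negP => hne.
  by apply: hno; exists i.
exfalso; apply: (hX1 Y YX1).
exists v1; split.
  move=> r; rewrite row_rV; split => // i.
  have hXY : X `^ (- c) = Y `^ (- (mu + 1)).
    rewrite /Y -powRrM; congr (_ `^ _); rewrite /d; field.
    by rewrite gt_eqF //; lra.
  have hYm : Y * Y `^ (- (mu + 1)) = Y `^ (- mu).
    rewrite -{1}(powRr1 (ltW (lt_le_trans ltr01 Y1))) -powRD.
      by congr (_ `^ _); ring.
    by apply/implyP => _; rewrite gt_eqF //; lra.
  rewrite -hYm -hXY.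
  have hx2R := int_norm_ge1 x2n0.
  set e1 := zeta i * _ - _.
  apply: (@le_trans _ _ (`|((v2 0 ord0)%:~R : R)| * `|e1|)).
    by rewrite -[X in X <= _]mul1r; apply: ler_wpM2r.
  have -> : `|((v2 0 ord0)%:~R : R)| * `|e1| =
      `|((v1 0 ord0)%:~R : R)| * `|zeta i * (v2 0 ord0)%:~R - (v2 0 (lift ord0 i))%:~R|.
    rewrite -!normrM; congr `| _ |.
    have := congr1 (fun z : int => (z%:~R : R)) (hpar i); rewrite !intrM => h.
    rewrite /e1 !mulrBr h; ring.
  apply: ler_pM => //; exact: normr_ge0.
apply/eqP; rewrite eqn_leq rank_leq_row lt0n mxrank_eq0; apply/eqP => h0.
have := congr1 (fun M : 'M[R]_(1, k.+1) => M 0 ord0) h0; rewrite !mxE => /eqP.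
by rewrite intr_eq0; apply/negP.
Qed.

End C.

Unset Implicit Arguments.

Theorem lemma8 (R : realType) (k : nat) (hk : (0 < k)%N) (zeta : 'I_k -> R) :
  lambda 1 zeta = +oo%E <->
  (forall j : nat, (2 <= j <= k.+1)%N -> lambda_hat j zeta = 0%E).
Proof.
split.
- move=> H j /andP[j2 jk].
  apply/eqP; rewrite eq_le; apply/andP; split.
  + apply: ge_ereal_sup => y [eta hS <-]; rewrite lee_fin leNgt; apply/negP => heta.
    apply: (no_two j2 heta _ hS) => N.
    have : (N%:E < lambda 1 zeta)%E by rewrite H ltry.
    move=> /ereal_sup_gt [y' [eta' hS' <-]]; rewrite lte_fin => hlt.
    by exists eta'; split => //; exact: ltW.
  + apply/lee_addgt0Pr => e he.
    have [X0 hX0] := Sh_neg zeta jk he.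
    have : ((- e)%:E <= lambda_hat j zeta)%E.
      by apply: ereal_sup_ubound; exists (- e) => //; exists X0.
    case: (lambda_hat j zeta) => [r| |] //=; rewrite ?lee_fin => h.
    * lra.
    * by rewrite addye ?leey.
- move=> H.
  have h2 := H 2%N (ltac:(by rewrite /= ltnS hk)).
  have key : forall mu : R, 1 <= mu -> (lambda 1 zeta < mu%:E)%E -> False.
    move=> mu mu1 hlt.
    have nS : ~ S1 zeta mu.
      move=> hS.
      have : (mu%:E <= lambda 1 zeta)%E by apply: ereal_sup_ubound; exists mu.
      by rewrite leNgt hlt.
    have [eta [heta [X0 hX0]]] := some_two hk mu1 nS.
    have : (eta%:E <= lambda_hat 2 zeta)%E.
      by apply: ereal_sup_ubound; exists eta => //; exists X0.
    rewrite h2 lee_fin; lra.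
  case E: (lambda 1 zeta) => [r| |] //; exfalso.
    apply: (key (Num.max 1 (r + 1))); first by rewrite le_max lexx.
    by rewrite E lte_fin lt_max; apply/orP; right; lra.
  by apply: (key 1) => //; rewrite E ltNye.
Qed.
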